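(* Consider a firm selling a single product in bundle sizes $i\in N=\{1,\dots,n\}$ to customer types $j\in M$. Suppose that for every $j\in M$, $d_{ij}(p)$ is (weakly) increasing in $p_k$ for all $k\ne i$, and $\sum_{i\in N}i\,d_{ij}(p)$ is (weakly) decreasing in each component of $p$. Let $f\in\mathbb{R}^n$ with $f_i=i$. Then $$\bar{\mathcal{R}}\le\beta\,\mathcal{R}^f\le\beta\,\mathcal{R}^*,\qquad \beta=1+\ln(q_{\max}/q_{\min}),$$ where $\mathcal{R}^*$ is the profit from the optimal non-personalized non-linear pricing policy and $\mathcal{R}^f$ is the optimal profit under the non-personalized linear pricing policy $p_i=iq$.
   Context: $p_i$ is the price of a size-$i$ bundle, $p=(p_1,\dots,p_n)$, and $d_{ij}(p)\ge0$ is the demand for size-$i$ bundles from customer type $j\in M=\{1,\dots,m\}$; type weights $\theta_j>0$, $\sum_j\theta_j=1$. $R_j(p)=\sum_ip_id_{ij}(p)$, $\mathcal{R}^*_j=\max_{p\ge0}R_j(p)$, $\bar{\mathcal{R}}=\sum_j\theta_j\mathcal{R}^*_j$ (optimal personalized non-linear pricing profit), $R(p)=\sum_j\theta_jR_j(p)$, $\mathcal{R}^*=\max_{p\ge0}R(p)$, $\mathcal{R}^f=\max_{q>0}R(qf)$. Standing assumption (A0): for each $j$, $R_j$ attains its maximum over $p\ge 0$ at a price vector $\bar p^j$ with positive finite components $\bar p_{ij}$. $q_{\min}=\min_{i,j}\bar p_{ij}/f_i=\min_{i,j}\bar p_{ij}/i$ and $q_{\max}=\max_{i,j}\bar p_{ij}/i$.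 *)

(* Defs.v *)
From HB Require Import structures.
From mathcomp Require Import all_boot all_order all_algebra.
From mathcomp Require Import all_classical all_reals all_analysis.
Set Implicit Arguments. Unset Strict Implicit. Unset Printing Implicit Defensive.
Import Order.TTheory GRing.Theory Num.Theory.
Local Open Scope ring_scope.
Local Open Scope classical_set_scope.

(* Bundle sizes N = {1,...,n} are indexed by i : 'I_n, where index i stands
   for the bundle of size i+1.  Customer types M = {1,...,m} by 'I_m.
   A price vector is a function p : 'I_n -> R. *)

Definition bsize {R : realType} {n : nat} (i : 'I_n) : R := (i.+1)%:R.

Definition nonneg_price {R : realType} {n : nat} (p : 'I_n -> R) : Prop :=
  forall i, 0 <= p i.

Definition rev_j {R : realType} {n m : nat}
  (d : 'I_n -> 'I_m -> ('I_n -> R) -> R) (j : 'I_m) (p : 'I_n -> R) : R :=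
  \sum_(i < n) p i * d i j p.

Definition rev_tot {R : realType} {n m : nat} (theta : 'I_m -> R)
  (d : 'I_n -> 'I_m -> ('I_n -> R) -> R) (p : 'I_n -> R) : R :=
  \sum_(j < m) theta j * rev_j d j p.

Definition lin_price {R : realType} {n : nat} (q : R) : 'I_n -> R :=
  fun i => q * bsize i.

Definition Rstar {R : realType} {n m : nat} (theta : 'I_m -> R)
  (d : 'I_n -> 'I_m -> ('I_n -> R) -> R) : R :=
  sup [set x | exists2 p : 'I_n -> R, nonneg_price p & x = rev_tot theta d p].

Definition Rlin {R : realType} {n m : nat} (theta : 'I_m -> R)
  (d : 'I_n -> 'I_m -> ('I_n -> R) -> R) : R :=
  sup [set x | exists2 q : R, 0 < q & x = rev_tot theta d (lin_price q)].

Definition cross_increasing {R : realType} {n m : nat}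
  (d : 'I_n -> 'I_m -> ('I_n -> R) -> R) (j : 'I_m) : Prop :=
  forall (i k : 'I_n) (p p' : 'I_n -> R),
    k != i -> nonneg_price p -> nonneg_price p' ->
    (forall l, l != k -> p l = p' l) -> p k <= p' k ->
    d i j p <= d i j p'.

Definition units_decreasing {R : realType} {n m : nat}
  (d : 'I_n -> 'I_m -> ('I_n -> R) -> R) (j : 'I_m) : Prop :=
  forall (k : 'I_n) (p p' : 'I_n -> R),
    nonneg_price p -> nonneg_price p' ->
    (forall l, l != k -> p l = p' l) -> p k <= p' k ->
    \sum_(i < n) bsize i * d i j p' <= \sum_(i < n) bsize i * d i j p.

(* Main.v *)
Require Import Defs.
From HB Require Import structures.
From mathcomp Require Import all_boot all_order all_algebra.
From mathcomp Require Import all_classical all_reals all_analysis.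
From mathcomp Require Import ring lra.
Import Order.TTheory GRing.Theory Num.Theory.
Local Open Scope ring_scope.

Lemma ln_div_ge (R : realType) (a c : R) : 0 < c -> c <= a -> 1 - c / a <= ln (a / c).
Proof.
move=> c0 ca; have a0 : 0 < a by apply: lt_le_trans ca.
have h := @le_ln1Dx R (c / a - 1).
have h1 : -1 < c / a - 1 by rewrite ltrBrDr addNr divr_gt0.
have := h h1; rewrite addrC subrK => h2.
have -> : a / c = (c / a)^-1 by rewrite invf_div.
rewrite lnV ?posrE ?divr_gt0 //; lra.
Qed.

Lemma key (R : realType) (T : eqType) (v w : T -> R) (F : R) (s : seq T) :
  sorted (fun a b => v a <= v b) s ->
  (forall a, a \in s -> 0 <= w a) ->
  (forall t, 0 < t -> t * \sum_(a <- s | t <= v a) w a <= F) ->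
  forall c V, 0 < c -> c <= V -> (forall a, a \in s -> c <= v a /\ v a <= V) ->
  \sum_(a <- s) v a * w a <= c * \sum_(a <- s) w a + F * ln (V / c).
Proof.
elim: s => [|x s IH] srt wge hF c V c0 cV hv.
  rewrite !big_nil mulr0 add0r.
  have F0 : 0 <= F by have := hF 1 ltr01; rewrite big_nil mulr0.
  apply: mulr_ge0 => //; apply: ln_ge0.
  by rewrite ler_pdivlMr // mul1r.
have srt' : sorted (fun a b => v a <= v b) s by apply: path_sorted srt.
have allx : all (fun b => v x <= v b) s.
  by apply: (order_path_min _ srt) => a b e; apply: le_trans.
have [cx xV] := hv x (mem_head _ _).
have x0 : 0 < v x by apply: lt_le_trans cx.
have wx : 0 <= w x by apply: wge; rewrite mem_head.
have wge' : forall a, a \in s -> 0 <= w a by move=> a ha; apply: wge; rewrite in_cons ha orbT.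
have hF' : forall t, 0 < t -> t * \sum_(a <- s | t <= v a) w a <= F.
  move=> t t0; apply: le_trans (hF t t0); apply: ler_wpM2l; first exact: ltW.
  rewrite big_cons; case: ifP => _; last exact: lexx.
  by rewrite lerDr.
have hv' : forall a, a \in s -> v x <= v a /\ v a <= V.
  move=> a ha; split; first by move/allP: allx => /(_ a ha).
  by case: (hv a); rewrite ?in_cons ?ha ?orbT.
have IH' := IH srt' wge' hF' (v x) V x0 xV hv'.
have hW : v x * \sum_(a <- x :: s) w a <= F.
  have eqs : \sum_(a <- s | v x <= v a) w a = \sum_(a <- s) w a.
    rewrite big_seq_cond [RHS]big_seq; apply: eq_bigl => a.
    case ha: (a \in s) => //=; by move/allP: allx => /(_ a ha) ->.
  by have := hF (v x) x0; rewrite !big_cons lexx eqs.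
rewrite !big_cons.
set W' := \sum_(a <- s) w a.
rewrite big_cons -/W' in hW.
have lnsplit : ln (V / c) = ln (V / v x) + ln (v x / c).
  rewrite -lnM ?posrE ?divr_gt0 //; last exact: lt_le_trans xV.
  by congr ln; field; rewrite ?gt_eqF.
have V0 : 0 < V by apply: lt_le_trans xV.
have L2 := @ln_div_ge R _ _ c0 cx.
have F0 : 0 <= F by apply: le_trans hW; apply: mulr_ge0; [exact: ltW|]; apply: addr_ge0 => //; rewrite /W' big_seq; apply: sumr_ge0 => a; exact: wge'.
have e : (v x - c) * (w x + W') = (1 - c / v x) * (v x * (w x + W')).
  by field; rewrite gt_eqF.
have h1 : (1 - c / v x) * (v x * (w x + W')) <= (1 - c / v x) * F.
  apply: ler_wpM2l => //; rewrite subr_ge0 ler_pdivrMr // mul1r //.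
have h2 : (1 - c / v x) * F <= F * ln (v x / c).
  by rewrite mulrC; apply: ler_wpM2l.
have h3 : (v x - c) * (w x + W') <= F * ln (v x / c) by rewrite e; apply: le_trans h1 h2.
rewrite lnsplit.
have e2 : c * (w x + W') + F * (ln (V / v x) + ln (v x / c)) = v x * w x + (v x * W' + F * ln (V / v x)) + (F * ln (v x / c) - (v x - c) * (w x + W')) by ring.
rewrite e2 -addrA lerD2l; apply: le_trans IH' _.
by rewrite lerDl subr_ge0.
Qed.

Lemma interp (R : realType) (n : nat) (G : ('I_n -> R) -> R) (p p' : 'I_n -> R) :
  nonneg_price p -> nonneg_price p' -> (forall l, p l <= p' l) ->
  (forall k (x y : 'I_n -> R), nonneg_price x -> nonneg_price y ->
     (forall l, l != k -> x l = y l) -> x k <= y k -> p k != p' k -> G x <= G y) ->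
  G p <= G p'.
Proof.
move=> pn pn' ple hyp.
pose r (t : nat) := fun l : 'I_n => if (l < t)%N then p' l else p l.
have rn : forall t, nonneg_price (r t) by move=> t l; rewrite /r; case: ifP.
have H : forall t, (t <= n)%N -> G p <= G (r t).
  elim=> [|t IH] ht.
    have -> : r 0%N = p by apply: funext => l; rewrite /r ltn0.
    exact: lexx.
  apply: le_trans (IH (ltnW ht)) _.
  pose k := Ordinal ht.
  have [e|ne] := eqVneq (p k) (p' k).
    have -> : r t.+1 = r t.
      apply: funext => l; rewrite /r [(l < t.+1)%N]ltnS [(l <= t)%N]leq_eqVlt.
      case: eqVneq => [hl|hl] //=.
      have -> : l = k by apply: val_inj.
      by rewrite ltnn e.
    exact: lexx.
  apply: (hyp k) => //.
  - move=> l hl.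
    have hlt : (nat_of_ord l == t) = false.
      apply: negbTE; apply: contra hl => /eqP hl; apply/eqP; exact: val_inj.
    rewrite /r; have -> : (l < t.+1)%N = (l < t)%N by rewrite ltnS leq_eqVlt hlt.
    by [].
  - by rewrite /r /= ltnn leqnn.
have -> : p' = r n by apply: funext => l; rewrite /r ltn_ord.
exact: H.
Qed.

Lemma bsize_gt0 (R : realType) (n : nat) (i : 'I_n) : 0 < (bsize i : R).
Proof. by rewrite /bsize ltr0Sn. Qed.

Lemma demand (R : realType) (n m : nat) (d : 'I_n -> 'I_m -> ('I_n -> R) -> R)
  (pbar : 'I_n -> R) (j : 'I_m) (q : R) :
  (forall i j p, nonneg_price p -> 0 <= d i j p) -> (forall i, 0 < pbar i) ->
  cross_increasing d j -> units_decreasing d j -> 0 < q ->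
  \sum_(i < n | q <= pbar i / bsize i) bsize i * d i j pbar <=
  \sum_(i < n) bsize i * d i j (lin_price q).
Proof.
move=> hd hpb hcross hunits q0.
pose ph := fun i => if q <= pbar i / bsize i then pbar i else q * bsize i.
have b0 := @bsize_gt0 R n.
have pbn : nonneg_price pbar by move=> i; exact: ltW.
have phn : nonneg_price ph.
  by move=> i; rewrite /ph /=; case: ifP => _; [exact: ltW|apply: mulr_ge0; apply: ltW].
have linn : nonneg_price (lin_price (n:=n) q).
  by move=> i; rewrite /lin_price /=; apply: mulr_ge0; apply: ltW.
have le1 : forall i, pbar i <= ph i.
  move=> i; rewrite /ph /=; case: ifP => [_|/negbT]; first exact: lexx.
  by rewrite -ltNge ltr_pdivrMr // => h; apply: ltW.
have le2 : forall i, lin_price q i <= ph i.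
  move=> i; rewrite /ph /lin_price /=; case: ifP => [h|_]; last exact: lexx.
  by rewrite ler_pdivlMr // in h.
have stepa : forall i, q <= pbar i / bsize i -> d i j pbar <= d i j ph.
  move=> i h; apply: (@interp R n (d i j) pbar ph) => // k x y xn yn hxy hk ne.
  apply: (hcross i k x y) => //.
  by apply: contra ne => /eqP ->; rewrite /ph h.
have stepb : \sum_(i < n) bsize i * d i j ph <= \sum_(i < n) bsize i * d i j (lin_price q).
  have := @interp R n (fun x => - \sum_(i < n) bsize i * d i j x) _ _ linn phn le2.
  rewrite lerN2; apply => k x y xn yn hxy hk _.
  by rewrite lerN2; apply: (hunits k x y).
apply: le_trans stepb.
apply: (@le_trans _ _ (\sum_(i < n | q <= pbar i / bsize i) bsize i * d i j ph)).
  by apply: ler_sum => i h; apply: ler_wpM2l; [apply: ltW|apply: stepa].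
rewrite [X in _ <= X](bigID (fun i => q <= pbar i / bsize i)) /= lerDl.
by apply: sumr_ge0 => i _; apply: mulr_ge0; [apply: ltW|apply: hd].
Qed.

Theorem corollary4 (R : realType) (n m : nat)
  (theta : 'I_m -> R) (d : 'I_n -> 'I_m -> ('I_n -> R) -> R)
  (pbar : 'I_m -> 'I_n -> R) (qmin qmax : R) :
  (forall j, 0 < theta j) ->
  \sum_(j < m) theta j = 1 ->
  (forall i j p, nonneg_price p -> 0 <= d i j p) ->
  (* (A0): R_j is maximized over p >= 0 at pbar j, with positive finite entries *)
  (forall j i, 0 < pbar j i) ->
  (forall j p, nonneg_price p -> rev_j d j p <= rev_j d j (pbar j)) ->
  (* demand monotonicity assumptions *)
  (forall j, cross_increasing d j) ->
  (forall j, units_decreasing d j) ->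
  (* q_min = min_{i,j} pbar_ij / i, q_max = max_{i,j} pbar_ij / i *)
  (exists i j, qmin = pbar j i / bsize i) ->
  (forall i j, qmin <= pbar j i / bsize i) ->
  (exists i j, qmax = pbar j i / bsize i) ->
  (forall i j, pbar j i / bsize i <= qmax) ->
  let beta := 1 + ln (qmax / qmin) in
  let Rbar := \sum_(j < m) theta j * rev_j d j (pbar j) in
  Rbar <= beta * Rlin theta d /\ beta * Rlin theta d <= beta * Rstar theta d.
Proof.
move=> htheta hsum hd hpb hopt hcross hunits [i0 [j0 eqmin]] hmin [i1 [j1 eqmax]] hmax beta Rbar.
have b0 := @bsize_gt0 R n.
have linn : forall q : R, 0 < q -> nonneg_price (lin_price (n:=n) q).
  by move=> q q0 i; rewrite /lin_price /=; apply: mulr_ge0; apply: ltW.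
have rev_le : forall p, nonneg_price p -> rev_tot theta d p <= Rbar.
  move=> p pn; rewrite /rev_tot /Rbar; apply: ler_sum => j _.
  by apply: ler_wpM2l; [apply: ltW|apply: hopt].
have hasL : has_sup [set x | exists2 q : R, 0 < q & x = rev_tot theta d (lin_price q)].
  split; first by exists (rev_tot theta d (lin_price 1)); exists 1.
  by exists Rbar => x [q q0 ->]; apply: rev_le; apply: linn.
have hasS : has_sup [set x | exists2 p : 'I_n -> R, nonneg_price p & x = rev_tot theta d p].
  split; first by exists (rev_tot theta d (lin_price 1)); exists (lin_price 1) => //; apply: linn.
  by exists Rbar => x [p pn ->]; apply: rev_le.
have Rlin_ge : forall t, 0 < t -> rev_tot theta d (lin_price t) <= Rlin theta d.
  by move=> t t0; apply: (sup_upper_bound hasL); exists t.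
have LS : Rlin theta d <= Rstar theta d.
  apply: ge_sup; first by exists (rev_tot theta d (lin_price 1)); exists 1.
  move=> x [q q0 ->]; apply: (sup_upper_bound hasS); exists (lin_price q) => //; exact: linn.
have qmin0 : 0 < qmin by rewrite eqmin divr_gt0.
have qle : qmin <= qmax by apply: le_trans (hmin i0 j0) (hmax i0 j0).
have beta1 : 1 <= beta.
  rewrite /beta lerDl; apply: ln_ge0; by rewrite ler_pdivlMr // mul1r.
split; last by apply: ler_wpM2l => //; apply: le_trans beta1.
pose T := ('I_m * 'I_n)%type.
pose v := fun a : T => pbar a.1 a.2 / bsize a.2.
pose w := fun a : T => theta a.1 * (bsize a.2 * d a.2 a.1 (pbar a.1)).
pose s := sort (fun a b => v a <= v b) (index_enum T).
have ps : perm_eq s (index_enum T) by rewrite /s perm_sort perm_refl.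
have srt : sorted (fun a b => v a <= v b) s by apply: sort_sorted => a b; exact: le_total.
have wge : forall a, a \in s -> 0 <= w a.
  move=> a _; rewrite /w; apply: mulr_ge0; first exact: ltW.
  by apply: mulr_ge0; [apply: ltW|apply: hd => i; apply: ltW].
have hF : forall t, 0 < t -> t * \sum_(a <- s | t <= v a) w a <= Rlin theta d.
  move=> t t0; rewrite (perm_big _ ps) big_mkcond.
  have -> : \sum_(a <- index_enum T) (if t <= v a then w a else 0) =
     \sum_(j < m) \sum_(i < n) (if t <= pbar j i / bsize i then theta j * (bsize i * d i j (pbar j)) else 0).
    by rewrite pair_big; apply: eq_big => // -[j i].
  apply: le_trans (Rlin_ge t t0); rewrite /rev_tot mulr_sumr; apply: ler_sum => j _.
  have -> : rev_j d j (lin_price t) = t * \sum_(i < n) bsize i * d i j (lin_price t).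
    by rewrite /rev_j mulr_sumr; apply: eq_bigr => i _; rewrite /lin_price mulrA.
  have -> : \sum_(i < n) (if t <= pbar j i / bsize i then theta j * (bsize i * d i j (pbar j)) else 0)
     = theta j * \sum_(i < n | t <= pbar j i / bsize i) bsize i * d i j (pbar j).
    rewrite mulr_sumr [RHS]big_mkcond; apply: eq_bigr => i _; case: ifP => _ //; by rewrite mulr0.
  rewrite mulrCA; apply: ler_wpM2l; first exact: ltW.
  apply: ler_wpM2l; first exact: ltW.
  by apply: demand.
have hv : forall a, a \in s -> qmin <= v a /\ v a <= qmax.
  by move=> a _; split; [apply: hmin|apply: hmax].
have K := @key R _ v w (Rlin theta d) s srt wge hF qmin qmax qmin0 qle hv.
have eR : Rbar = \sum_(a <- s) v a * w a.
  rewrite (perm_big _ ps) /Rbar /rev_j.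
  transitivity (\sum_(j < m) \sum_(i < n) theta j * (pbar j i * d i j (pbar j))).
    by apply: eq_bigr => j _; rewrite mulr_sumr.
  rewrite pair_big; apply: eq_big => // -[j i] _ /=.
  rewrite /v /w /=; field; by rewrite nat1r pnatr_eq0.
have hW : qmin * \sum_(a <- s) w a <= Rlin theta d.
  have := hF qmin qmin0.
  have -> : \sum_(a <- s | qmin <= v a) w a = \sum_(a <- s) w a.
    by apply: eq_bigl => a; rewrite /v hmin.
  by [].
rewrite eR; apply: le_trans K _.
rewrite /beta mulrDl mul1r; apply: lerD => //; by rewrite mulrC.
Qed.
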